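(* Let $T$ be a square-integrable real random variable and let $X$ and $Y$ be independent random variables (on the same probability space as $T$). Then $L^r_T(X)+L^r_T(Y)=L^r_T(X,Y)$.
   Context: For random variables $Z_1,\dots,Z_k$, the restricted (additive, GAM-type) predictive power of $(Z_1,\dots,Z_k)$ for $T$ is $$L^r_T(Z_1,\dots,Z_k)=\sigma^2(T)-\inf\Bigl\{\sigma^2\Bigl(T-\sum_{i=1}^k f_i(Z_i)\Bigr)\ :\ f_i \text{ measurable},\ E[f_i(Z_i)^2]<\infty\Bigr\},$$ i.e. $\sigma^2(T)-\sigma^2(T-E^r[T\mid Z_1,\dots,Z_k])$ where $E^r[T\mid Z_1,\dots,Z_k]$ is the minimum-variance predictor of $T$ among (the $L^2$-closure of) sums of square-integrable functions of the individual $Z_i$. For a single variable this coincides with $\sigma^2(T)-\sigma^2(T-E[T\mid Z_1])$. $\sigma^2$ denotes variance. *)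

(* Defs.v *)
From HB Require Import structures.
From mathcomp Require Import all_boot all_order all_algebra.
From mathcomp Require Import all_classical all_reals all_analysis.
Set Implicit Arguments. Unset Strict Implicit. Unset Printing Implicit Defensive.
Import Order.TTheory GRing.Theory Num.Theory.
Local Open Scope classical_set_scope.
Local Open Scope ring_scope.

Definition independent_RV2 {d dX dY} {Om : measurableType d}
  {TX : measurableType dX} {TY : measurableType dY} {R : realType}
  (P : probability Om R) (X : Om -> TX) (Y : Om -> TY) : Prop :=
  forall (A : set TX) (B : set TY), measurable A -> measurable B ->
    P (X @^-1` A `&` Y @^-1` B) = (P (X @^-1` A) * P (Y @^-1` B))%E.

Definition admissible {d dZ} {Om : measurableType d} {TZ : measurableType dZ}
  {R : realType} (P : probability Om R) (Z : Om -> TZ) (f : TZ -> R) : Prop :=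
  measurable_fun setT f /\ (f \o Z) \in Lfun P 2%:E.

Definition Lr1 {d dZ} {Om : measurableType d} {TZ : measurableType dZ}
  {R : realType} (P : probability Om R) (T : Om -> R) (Z : Om -> TZ) : \bar R :=
  ('V_P[T] - ereal_inf [set 'V_P[(T \- (f \o Z))%R] | f in [set f | admissible P Z f]])%E.

Definition Lr2 {d d1 d2} {Om : measurableType d} {T1 : measurableType d1}
  {T2 : measurableType d2} {R : realType} (P : probability Om R)
  (T : Om -> R) (Z1 : Om -> T1) (Z2 : Om -> T2) : \bar R :=
  ('V_P[T] - ereal_inf [set 'V_P[(T \- (f.1 \o Z1) \- (f.2 \o Z2))%R] |
     f in [set f : (T1 -> R) * (T2 -> R) | admissible P Z1 f.1 /\ admissible P Z2 f.2]])%E.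

(* Main.v *)
From HB Require Import structures.
From mathcomp Require Import all_boot all_order all_algebra.
From mathcomp Require Import all_classical all_reals all_analysis.
From mathcomp Require Import measurable_realfun.
From mathcomp Require Import lra.
Require Import Defs.
Set Implicit Arguments. Unset Strict Implicit. Unset Printing Implicit Defensive.
Import Order.TTheory GRing.Theory Num.Theory.
Import numFieldNormedType.Exports.
Local Open Scope classical_set_scope.
Local Open Scope ring_scope.

Section indep.
Context {R : realType} {d dX dY : measure_display} {Om : measurableType d}
  {TX : measurableType dX} {TY : measurableType dY} (P : probability Om R)
  (X : {RV P >-> TX}) (Y : {RV P >-> TY}).
Hypothesis indep : independent_RV2 P X Y.

Definition XY : Om -> (TX * TY)%type := fun w => (X w, Y w).
Lemma mXY : measurable_fun setT XY.
Proof. exact: measurable_fun_pair. Qed.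
HB.instance Definition _ := isMeasurableFun.Build _ _ _ _ XY mXY.

Lemma distXY_prod A : measurable A ->
  (distribution P X \x distribution P Y)%E A = distribution P XY A.
Proof.
apply: product_measure_unique => A0 B mA mB.
rewrite /distribution /pushforward -indep //.
Qed.


Local Open Scope ereal_scope.
Lemma indep_expectationM (f : TX -> R) (g : TY -> R) :
  measurable_fun setT f -> measurable_fun setT g ->
  (f \o X)%R \in Lfun P 2%:E -> (g \o Y)%R \in Lfun P 2%:E ->
  'E_P[(f \o X) \* (g \o Y)] = 'E_P[f \o X] * 'E_P[g \o Y].
Proof.
move=> mf mg fX2 gY2.
have Pfin : P setT \is a fin_num := fin_num_measure P _ measurableT.
have fX1 := Lfun_subset12 Pfin fX2.
have gY1 := Lfun_subset12 Pfin gY2.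
have fgXY1 := Lfun2_mul_Lfun1 fX2 gY2.
pose h := fun z : (TX * TY)%type => ((f z.1) * (g z.2))%:E.
have mh : measurable_fun [set: (TX * TY)%type] h.
  apply/measurable_EFinP; apply: measurable_funM.
    exact: measurableT_comp.
  exact: measurableT_comp.
have intP : P.-integrable (XY @^-1` setT) (h \o XY).
  by rewrite preimage_setT; apply/Lfun1_integrable.
have E1 : 'E_P[(f \o X) \* (g \o Y)] = \int[distribution P XY]_z h z.
  rewrite unlock /distribution integral_pushforward//.
have E2 : \int[distribution P XY]_z h z =
    \int[(distribution P X \x distribution P Y)]_z h z.
  by apply: eq_measure_integral => A mA _; exact: (esym (distXY_prod mA)).
have inth : (distribution P X \x distribution P Y).-integrable setT h.
  have := integrable_pushforward mXY mh intP measurableT.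
  move/integrableP => [mh' hoo]; apply/integrableP; split => //.
  by rewrite (eq_measure_integral (distribution P XY))// => A mA _; exact: (distXY_prod mA).
have intg : (distribution P Y).-integrable setT (fun y => (g y)%:E).
  apply: (integrable_pushforward (measurable_funP Y)).
  - exact/measurable_EFinP.
  - by rewrite preimage_setT; apply/Lfun1_integrable.
  - exact: measurableT.
have intf : (distribution P X).-integrable setT (fun y => (f y)%:E).
  apply: (integrable_pushforward (measurable_funP X)).
  - exact/measurable_EFinP.
  - by rewrite preimage_setT; apply/Lfun1_integrable.
  - exact: measurableT.
have Ef : 'E_P[f \o X] = \int[distribution P X]_x (f x)%:E.
  rewrite unlock /distribution integral_pushforward//.
  - have mEf : measurable_fun setT (EFin \o f) by apply/measurable_EFinP.
    exact: mEf.
  - by rewrite preimage_setT; apply/Lfun1_integrable.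
have Eg : 'E_P[g \o Y] = \int[distribution P Y]_x (g x)%:E.
  rewrite unlock /distribution integral_pushforward//.
  - have mEg : measurable_fun setT (EFin \o g) by apply/measurable_EFinP.
    exact: mEg.
  - by rewrite preimage_setT; apply/Lfun1_integrable.
rewrite E1 E2 -integral12_prod_meas1//.
rewrite /fubini_F /h /=.
under eq_integral => x _ do under eq_integral => y _ do rewrite EFinM.
under eq_integral => x _ do rewrite (integralZl measurableT intg).
have gfin : \int[distribution P Y]_x (g x)%:E \is a fin_num.
  exact: integrable_fin_num.
rewrite -(fineK gfin).
rewrite Ef Eg.
rewrite -[X in _ = _ * X](fineK gfin).
exact: (integralZr measurableT intf).
Qed.

Lemma key_gen (T0 U V : Om -> R) :
  T0 \in Lfun P 2%:E -> U \in Lfun P 2%:E -> V \in Lfun P 2%:E ->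
  covariance P U V = 0%E ->
  'V_P[(T0 \- U \- V)%R] =
  'V_P[(T0 \- U)%R] + 'V_P[(T0 \- V)%R] - 'V_P[T0].
Proof.
move=> T2 U2 V2 cUV.
have TU2 : (T0 \- U)%R \in Lfun P 2%:E.
  by have := rpredB T2 U2; apply; rewrite lee1n.
have E1 : 'V_P[(T0 \- U \- V)%R] = 'V_P[(T0 \- U)%R] + 'V_P[V] -
   2%:E * covariance P (T0 \- U)%R V := varianceB TU2 V2.
have E2 : covariance P (T0 \- U)%R V = covariance P T0 V - covariance P U V
  := covarianceBl T2 U2 V2.
have E3 : 'V_P[(T0 \- V)%R] = 'V_P[T0] + 'V_P[V] -
   2%:E * covariance P T0 V := varianceB T2 V2.
rewrite E1 E2 cUV sube0 E3.
have fA := variance_fin_num TU2.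
have fB := variance_fin_num V2.
have fD := variance_fin_num T2.
have fC : covariance P T0 V \is a fin_num.
  have Pfin : P setT \is a fin_num := fin_num_measure P _ measurableT.
  have T1 := Lfun_subset12 Pfin T2.
  have V1 := Lfun_subset12 Pfin V2.
  have TV1 := Lfun2_mul_Lfun1 T2 V2.
  exact: covariance_fin_num.
rewrite -(fineK fA) -(fineK fB) -(fineK fC) -(fineK fD).
rewrite -!EFinM -!EFinN -!EFinD; congr EFin.
by rewrite /=; lra.
Qed.

Lemma indep_cov0 (f : TX -> R) (g : TY -> R) :
  measurable_fun setT f -> measurable_fun setT g ->
  (f \o X)%R \in Lfun P 2%:E -> (g \o Y)%R \in Lfun P 2%:E ->
  covariance P (f \o X) (g \o Y) = 0.
Proof.
move=> mf mg fX2 gY2.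
have Pfin : P setT \is a fin_num := fin_num_measure P _ measurableT.
have fX1 := Lfun_subset12 Pfin fX2.
have gY1 := Lfun_subset12 Pfin gY2.
have fgXY1 := Lfun2_mul_Lfun1 fX2 gY2.
rewrite covarianceE//.
have -> : 'E_P[((f \o X) * (g \o Y))%R] = 'E_P[(f \o X) \* (g \o Y)] by [].
rewrite indep_expectationM// subee// fin_numM// expectation_fin_num//.
Qed.

Lemma key (T0 : Om -> R) (f : TX -> R) (g : TY -> R) :
  T0 \in Lfun P 2%:E -> admissible P X f -> admissible P Y g ->
  'V_P[(T0 \- (f \o X) \- (g \o Y))%R] =
  'V_P[(T0 \- (f \o X))%R] + 'V_P[(T0 \- (g \o Y))%R] - 'V_P[T0].
Proof.
move=> T2 [mf fX2] [mg gY2].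
exact: (key_gen T2 fX2 gY2 (indep_cov0 mf mg fX2 gY2)).
Qed.

End indep.

Section inf.
Local Open Scope ereal_scope.
Context {R : realType}.

Lemma inf_fin {I : Type} (A : set I) (F : I -> R) :
  A !=set0 -> (forall i, A i -> (0 <= F i)%R) ->
  ereal_inf [set (F i)%:E | i in A] \is a fin_num.
Proof.
move=> [i0 Ai0] F0.
have h0 : 0 <= ereal_inf [set (F i)%:E | i in A].
  by apply: le_ereal_inf_tmp => _ [i Ai <-]; rewrite lee_fin F0.
have h1 : ereal_inf [set (F i)%:E | i in A] <= (F i0)%:E.
  by apply: ereal_inf_lbound; exists i0.
by rewrite ge0_fin_numE// (le_lt_trans h1)// ltry.
Qed.

Lemma inf_sum {I J : Type} (A : set I) (B : set J) (F : I -> R) (G : J -> R) (v : R) :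
  A !=set0 -> B !=set0 -> (forall i, A i -> (0 <= F i)%R) ->
  (forall j, B j -> (0 <= G j)%R) ->
  ereal_inf [set ((F p.1 + G p.2 - v)%R)%:E | p in [set p | A p.1 /\ B p.2]] =
  ereal_inf [set (F i)%:E | i in A] + ereal_inf [set (G j)%:E | j in B] - v%:E.
Proof.
move=> A0 B0 F0 G0.
have afin := inf_fin A0 F0.
have bfin := inf_fin B0 G0.
have [a aE] : exists a, ereal_inf [set (F i)%:E | i in A] = a%:E.
  by exists (fine (ereal_inf [set (F i)%:E | i in A])); rewrite fineK.
have [b bE] : exists b, ereal_inf [set (G j)%:E | j in B] = b%:E.
  by exists (fine (ereal_inf [set (G j)%:E | j in B])); rewrite fineK.
rewrite aE bE.
have -> : a%:E + b%:E - v%:E = ((a + b - v)%R)%:E by rewrite EFinB EFinD.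
apply/eqP; rewrite eq_le; apply/andP; split.
- apply/lee_addgt0Pr => e e0.
  have e20 : (0 < e / 2)%R by rewrite divr_gt0.
  have [_ [i Ai <-]] := lb_ereal_inf_adherent e20 afin.
  rewrite aE -EFinD lte_fin => Fi.
  have [_ [j Bj <-]] := lb_ereal_inf_adherent e20 bfin.
  rewrite bE -EFinD lte_fin => Gj.
  apply: ge_ereal_inf; exists ((F i + G j - v)%R)%:E; first by exists (i, j).
  by rewrite -EFinD lee_fin; lra.
- apply: le_ereal_inf_tmp => _ [[i j] [/= Ai Bj] <-].
  have : a%:E <= (F i)%:E by rewrite -aE; apply: ereal_inf_lbound; exists i.
  have : b%:E <= (G j)%:E by rewrite -bE; apply: ereal_inf_lbound; exists j.
  by rewrite !lee_fin /=; lra.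
Qed.
End inf.

Theorem theorem1 (R : realType) (d dX dY : measure_display)
  (Om : measurableType d) (TX : measurableType dX) (TY : measurableType dY)
  (P : probability Om R) (T : {RV P >-> R}) (X : {RV P >-> TX}) (Y : {RV P >-> TY}) :
  (T : Om -> R) \in Lfun P 2%:E ->
  independent_RV2 P X Y ->
  (Lr1 P T X + Lr1 P T Y = Lr2 P T X Y)%E.
Proof.
move=> T2 indep.
have fV := variance_fin_num T2.
have sub2 (Z : Om -> R) : Z \in Lfun P 2%:E -> (T \- Z)%R \in Lfun P 2%:E.
  by move=> Z2; have := rpredB T2 Z2; apply; rewrite lee1n.
pose AX := [set f : TX -> R | admissible P X f].
pose AY := [set f : TY -> R | admissible P Y f].
pose FX (f : TX -> R) := fine 'V_P[(T \- (f \o X))%R].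
pose FY (f : TY -> R) := fine 'V_P[(T \- (f \o Y))%R].
have FX0 f : AX f -> (0 <= FX f)%R by move=> _; apply: fine_ge0; exact: variance_ge0.
have FY0 f : AY f -> (0 <= FY f)%R by move=> _; apply: fine_ge0; exact: variance_ge0.
have AX0 : AX !=set0.
  exists (fun _ => 0%R); split; first exact: measurable_cst.
  exact: Lfun_cst.
have AY0 : AY !=set0.
  exists (fun _ => 0%R); split; first exact: measurable_cst.
  exact: Lfun_cst.
have SXE : [set 'V_P[(T \- (f \o X))%R] | f in [set f | admissible P X f]] =
    [set (FX f)%:E | f in AX].
  apply: eq_imagel => f [mf fX2]; rewrite /FX fineK//.
  exact/variance_fin_num/sub2.
have SYE : [set 'V_P[(T \- (f \o Y))%R] | f in [set f | admissible P Y f]] =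
    [set (FY f)%:E | f in AY].
  apply: eq_imagel => f [mf fY2]; rewrite /FY fineK//.
  exact/variance_fin_num/sub2.
have S2E : [set 'V_P[(T \- (f.1 \o X) \- (f.2 \o Y))%R] |
     f in [set f : (TX -> R) * (TY -> R) | admissible P X f.1 /\ admissible P Y f.2]] =
    [set ((FX p.1 + FY p.2 - fine 'V_P[T])%R)%:E | p in [set p | AX p.1 /\ AY p.2]].
  apply: eq_imagel => -[f g] [hf hg] /=.
  rewrite (key indep T2 hf hg) EFinB EFinD /FX /FY !fineK//.
  - by case: hg => _ ?; exact/variance_fin_num/sub2.
  - by case: hf => _ ?; exact/variance_fin_num/sub2.
rewrite /Lr1 /Lr2 SXE SYE S2E (inf_sum _ AX0 AY0 FX0 FY0).
have xfin := inf_fin AX0 FX0.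
have yfin := inf_fin AY0 FY0.
move: xfin yfin.
set x := ereal_inf _; set y := ereal_inf _ => xfin yfin.
rewrite -(fineK xfin) -(fineK yfin) -(fineK fV).
rewrite -!EFinN -!EFinD; congr EFin.
by rewrite /=; lra.
Qed.
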